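(* Let $\mathcal H$ be a Hilbert space and $\mathcal S,\mathcal A\subseteq\mathcal H$ closed subspaces with $\mathcal S,\mathcal A,\mathcal S^\perp,\mathcal A^\perp$ nonzero and $\mathcal A\oplus\mathcal S^\perp=\mathcal H$. Fix $\lambda\in[0,1]$, let $B:=\lambda P_{\mathcal A\mathcal S^\perp}+(1-\lambda)P_{\mathcal S}$ and $\mathcal B:=\mathcal R(B)$. Then $$\frac{1}{1+\lambda^2\frac{\sin^2(\mathcal A,\mathcal S)}{\cos^2(\mathcal A,\mathcal S)}}\le\cos^2(\mathcal B,\mathcal S)\le\frac{1}{1+\lambda^2\frac{\cos^2(\mathcal A,\mathcal S^\perp)}{\sin^2(\mathcal A,\mathcal S^\perp)}}.$$ In particular $\cos(\mathcal B,\mathcal S)\ge\cos(\mathcal A,\mathcal S)$.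
   Context: $P_{\mathcal V}$ is the orthogonal projection onto a closed subspace $\mathcal V$, $\mathcal V^\perp$ its orthogonal complement, $\mathcal R(\cdot)$ the range. For closed subspaces with $\mathcal V_1\oplus\mathcal V_2=\mathcal H$, $P_{\mathcal V_1\mathcal V_2}$ is the oblique projection onto $\mathcal V_1$ along $\mathcal V_2$ (identity on $\mathcal V_1$, zero on $\mathcal V_2$). Angles between nonzero closed subspaces: $\cos(\mathcal V_1,\mathcal V_2):=\inf_{0\ne x\in\mathcal V_1}\|P_{\mathcal V_2}x\|/\|x\|$, $\sin(\mathcal V_1,\mathcal V_2):=\sup_{0\ne x\in\mathcal V_1}\|P_{\mathcal V_2^\perp}x\|/\|x\|$. *)

(* Defs.v *)
From Stdlib Require Import Reals ClassicalEpsilon.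
Open Scope R_scope.

Record Hilbert := {
  hcar :> Type;
  hzero : hcar;
  hadd : hcar -> hcar -> hcar;
  hopp : hcar -> hcar;
  hscal : R -> hcar -> hcar;
  hinner : hcar -> hcar -> R;
  haddA : forall x y z, hadd x (hadd y z) = hadd (hadd x y) z;
  haddC : forall x y, hadd x y = hadd y x;
  hadd0 : forall x, hadd hzero x = x;
  haddN : forall x, hadd x (hopp x) = hzero;
  hscalA : forall a b x, hscal a (hscal b x) = hscal (a * b) x;
  hscal1 : forall x, hscal 1 x = x;
  hscalDr : forall a x y, hscal a (hadd x y) = hadd (hscal a x) (hscal a y);
  hscalDl : forall a b x, hscal (a + b) x = hadd (hscal a x) (hscal b x);
  hinner_sym : forall x y, hinner x y = hinner y x;
  hinner_addl : forall x y z, hinner (hadd x y) z = hinner x z + hinner y z;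
  hinner_scall : forall a x y, hinner (hscal a x) y = a * hinner x y;
  hinner_pos : forall x, 0 <= hinner x x;
  hinner_def : forall x, hinner x x = 0 -> x = hzero;
  hcomplete : forall u : nat -> hcar,
    (forall eps, eps > 0 -> exists N : nat, forall m n : nat, (N <= m)%nat -> (N <= n)%nat ->
        sqrt (hinner (hadd (u m) (hopp (u n))) (hadd (u m) (hopp (u n)))) < eps) ->
    exists l, forall eps, eps > 0 -> exists N : nat, forall n : nat, (N <= n)%nat ->
        sqrt (hinner (hadd (u n) (hopp l)) (hadd (u n) (hopp l))) < eps
}.

Arguments hzero {h}.
Arguments hadd {h}.
Arguments hopp {h}.
Arguments hscal {h}.
Arguments hinner {h}.

Section Ops.
Variable H : Hilbert.

Definition hsub (x y : H) : H := hadd x (hopp y).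
Definition hnorm (x : H) : R := sqrt (hinner x x).

Definition converges (u : nat -> H) (l : H) : Prop :=
  forall eps, eps > 0 -> exists N : nat, forall n : nat, (N <= n)%nat -> hnorm (hsub (u n) l) < eps.

Definition closed_subspace (V : H -> Prop) : Prop :=
  V hzero /\ (forall x y, V x -> V y -> V (hadd x y)) /\
  (forall (a : R) x, V x -> V (hscal a x)) /\
  (forall u l, (forall n, V (u n)) -> converges u l -> V l).

Definition nonzero_sub (V : H -> Prop) : Prop := exists x, V x /\ x <> hzero.

Definition perp (V : H -> Prop) : H -> Prop := fun x => forall y, V y -> hinner x y = 0.

Definition direct_sum_full (V1 V2 : H -> Prop) : Prop :=
  (forall x, exists v1 v2, V1 v1 /\ V2 v2 /\ x = hadd v1 v2) /\
  (forall x, V1 x -> V2 x -> x = hzero).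

Definition proj (V : H -> Prop) (x : H) : H :=
  epsilon (inhabits hzero) (fun y => V y /\ perp V (hsub x y)).

Definition oproj (V1 V2 : H -> Prop) (x : H) : H :=
  epsilon (inhabits hzero) (fun y => V1 y /\ V2 (hsub x y)).

Definition range (T : H -> H) : H -> Prop := fun y => exists x, y = T x.
End Ops.

Arguments hsub {H}.
Arguments hnorm {H}.
Arguments converges {H}.
Arguments closed_subspace {H}.
Arguments nonzero_sub {H}.
Arguments perp {H}.
Arguments direct_sum_full {H}.
Arguments proj {H}.
Arguments oproj {H}.
Arguments range {H}.

Definition is_glb (E : R -> Prop) (m : R) : Prop :=
  (forall x, E x -> m <= x) /\ (forall b, (forall x, E x -> b <= x) -> b <= m).
Definition Rinf (E : R -> Prop) : R := epsilon (inhabits 0) (is_glb E).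
Definition Rsup (E : R -> Prop) : R := epsilon (inhabits 0) (is_lub E).

Definition cos_ang {H : Hilbert} (V1 V2 : H -> Prop) : R :=
  Rinf (fun r => exists x, V1 x /\ x <> hzero /\ r = hnorm (proj V2 x) / hnorm x).
Definition sin_ang {H : Hilbert} (V1 V2 : H -> Prop) : R :=
  Rsup (fun r => exists x, V1 x /\ x <> hzero /\ r = hnorm (proj (perp V2) x) / hnorm x).

(* Main.v *)
Require Import Defs.
From Stdlib Require Import Reals Lra Lia Psatz ClassicalEpsilon Classical.
Open Scope R_scope.

Fixpoint iter_seq {X : Type} (x0 : X) (f : nat -> X -> X) (k : nat) : X :=
  match k with O => x0 | Datatypes.S k => f k (iter_seq x0 f k) end.

Lemma inv_half k : / (INR k + 1) / 2 <= / (INR (Datatypes.S k) + 1).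
Proof. rewrite S_INR. pose proof (pos_INR k).
  unfold Rdiv. rewrite <- Rinv_mult. apply Rinv_le_contravar; lra. Qed.

Section HS.
Context {H : Hilbert}.
Implicit Types x y z u v w : H.

Lemma ip_addl x y z : hinner (hadd x y) z = hinner x z + hinner y z.
Proof. exact (hinner_addl H x y z). Qed.
Lemma ip_scall a x y : hinner (hscal a x) y = a * hinner x y.
Proof. exact (hinner_scall H a x y). Qed.
Lemma ip_sym x y : hinner x y = hinner y x.
Proof. exact (hinner_sym H x y). Qed.
Lemma ip_addr x y z : hinner z (hadd x y) = hinner z x + hinner z y.
Proof. rewrite (ip_sym z), (ip_sym z x), (ip_sym z y); apply ip_addl. Qed.
Lemma ip_scalr a x y : hinner y (hscal a x) = a * hinner y x.
Proof. rewrite (ip_sym y), (ip_sym y x); apply ip_scall. Qed.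
Lemma ip_0l z : hinner (@hzero H) z = 0.
Proof. pose proof (ip_addl hzero hzero z) as E. rewrite (hadd0 H) in E. lra. Qed.
Lemma ip_0r z : hinner z (@hzero H) = 0.
Proof. rewrite ip_sym; apply ip_0l. Qed.
Lemma ip_oppl x z : hinner (hopp x) z = - hinner x z.
Proof. pose proof (ip_addl x (hopp x) z) as E. rewrite (haddN H), ip_0l in E. lra. Qed.
Lemma ip_oppr x z : hinner z (hopp x) = - hinner z x.
Proof. rewrite (ip_sym z), (ip_sym z x); apply ip_oppl. Qed.
Lemma ip_subl x y z : hinner (hsub x y) z = hinner x z - hinner y z.
Proof. unfold hsub. rewrite ip_addl, ip_oppl. ring. Qed.
Lemma ip_subr x y z : hinner z (hsub x y) = hinner z x - hinner z y.
Proof. rewrite (ip_sym z), (ip_sym z x), (ip_sym z y); apply ip_subl. Qed.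

Lemma ip_ext u v : (forall w, hinner u w = hinner v w) -> u = v.
Proof.
  intros E. assert (hinner (hsub u v) (hsub u v) = 0) as E0.
  { rewrite ip_subl, !E. ring. }
  apply (hinner_def H) in E0. unfold hsub in E0.
  assert (hadd (hadd u (hopp v)) v = u) as E1.
  { rewrite <- (haddA H), (haddC H (hopp v)), (haddN H), (haddC H), (hadd0 H). reflexivity. }
  rewrite E0, (hadd0 H) in E1. symmetry; exact E1.
Qed.

Ltac ips := repeat first [ rewrite ip_addl | rewrite ip_addr | rewrite ip_scall | rewrite ip_scalr
  | rewrite ip_oppl | rewrite ip_oppr | rewrite ip_subl | rewrite ip_subr | rewrite ip_0l | rewrite ip_0r ].
Ltac vec := apply ip_ext; intro; ips; ring.

Lemma hopp_scal x : hopp x = hscal (-1) x.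
Proof. vec. Qed.
Lemma hsub_scal x y : hsub x y = hadd x (hscal (-1) y).
Proof. vec. Qed.

Lemma nsq_pos x : 0 <= hinner x x.
Proof. exact (hinner_pos H x). Qed.
Lemma hnorm_pos x : 0 <= hnorm x.
Proof. apply sqrt_pos. Qed.
Lemma hnorm_sq x : hnorm x * hnorm x = hinner x x.
Proof. apply sqrt_sqrt, nsq_pos. Qed.
Lemma nsq_eq0 x : hinner x x = 0 -> x = hzero.
Proof. exact (hinner_def H x). Qed.
Lemma hnorm_eq0 x : hnorm x = 0 -> x = hzero.
Proof. intro E. apply nsq_eq0. rewrite <- hnorm_sq, E. ring. Qed.
Lemma hnorm0 : hnorm (@hzero H) = 0.
Proof. unfold hnorm. rewrite ip_0l. apply sqrt_0. Qed.
Lemma hnorm_gt0 x : x <> hzero -> 0 < hnorm x.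
Proof. intro N. destruct (hnorm_pos x) as [h|h]; auto. exfalso; apply N, hnorm_eq0; auto. Qed.
Lemma hnorm_scal a x : hnorm (hscal a x) = Rabs a * hnorm x.
Proof. unfold hnorm. ips. rewrite <- Rmult_assoc, sqrt_mult; [| nra | apply nsq_pos].
  fold (Rsqr a). rewrite sqrt_Rsqr_abs. reflexivity. Qed.

Lemma Rabs_m1 : Rabs (-1) = 1.
Proof. rewrite Rabs_left; lra. Qed.
Lemma sq_le_le a b : 0 <= b -> a * a <= b * b -> a <= b.
Proof. intros. nra. Qed.

Lemma CS2 x y : hinner x y * hinner x y <= hinner x x * hinner y y.
Proof.
  destruct (nsq_pos y) as [Hy|Hy].
  - pose proof (nsq_pos (hsub (hscal (hinner y y) x) (hscal (hinner x y) y))) as P.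
    revert P; ips; intro P; try rewrite (ip_sym y x) in P; nra.
  - symmetry in Hy. apply nsq_eq0 in Hy. subst. rewrite !ip_0r. nra.
Qed.
Lemma CS x y : hinner x y <= hnorm x * hnorm y.
Proof.
  apply sq_le_le. apply Rmult_le_pos; apply hnorm_pos.
  replace (hnorm x * hnorm y * (hnorm x * hnorm y)) with ((hnorm x * hnorm x) * (hnorm y * hnorm y)) by ring.
  rewrite !hnorm_sq. apply CS2.
Qed.
Lemma CSabs x y : Rabs (hinner x y) <= hnorm x * hnorm y.
Proof.
  unfold Rabs; destruct Rcase_abs. 2: apply CS.
  rewrite <- ip_oppl. eapply Rle_trans. apply CS. rewrite hopp_scal, hnorm_scal.
  rewrite Rabs_m1. lra.
Qed.
Lemma hnorm_add x y : hnorm (hadd x y) <= hnorm x + hnorm y.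
Proof.
  apply sq_le_le. pose proof (hnorm_pos x); pose proof (hnorm_pos y); lra.
  rewrite hnorm_sq. ips. rewrite (ip_sym y x).
  pose proof (CS x y). pose proof (hnorm_sq x). pose proof (hnorm_sq y). nra.
Qed.
Lemma hnorm_sub x y : hnorm (hsub x y) <= hnorm x + hnorm y.
Proof. rewrite hsub_scal. eapply Rle_trans. apply hnorm_add. rewrite hnorm_scal.
  rewrite Rabs_m1. lra. Qed.
Lemma hnorm_tri x y z : hnorm (hsub x z) <= hnorm (hsub x y) + hnorm (hsub y z).
Proof. replace (hsub x z) with (hadd (hsub x y) (hsub y z)) by vec. apply hnorm_add. Qed.
Lemma hnorm_symsub x y : hnorm (hsub x y) = hnorm (hsub y x).
Proof. replace (hsub x y) with (hscal (-1) (hsub y x)) by vec. rewrite hnorm_scal.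
  rewrite Rabs_m1. lra. Qed.
Lemma hsub_eq0 x y : hsub x y = hzero -> x = y.
Proof. intro E. apply ip_ext. intro w. assert (hinner (hsub x y) w = 0) by (rewrite E; apply ip_0l).
  rewrite ip_subl in H0. lra. Qed.
Lemma hsub_self x : hsub x x = hzero.
Proof. vec. Qed.

Definition subspace (V : H -> Prop) :=
  V hzero /\ (forall x y, V x -> V y -> V (hadd x y)) /\ (forall a x, V x -> V (hscal a x)).
Lemma cs_sub V : closed_subspace V -> subspace V.
Proof. intros (a&b&c&_); repeat split; auto. Qed.
Lemma sub_sub V x y : subspace V -> V x -> V y -> V (hsub x y).
Proof. intros (a&b&c) Hx Hy. rewrite hsub_scal. auto. Qed.
Lemma perp_sub V : subspace (perp V).
Proof. unfold perp; repeat split; intros; ips.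
  - reflexivity. - rewrite H0, H1 by auto; ring. - rewrite H0 by auto; ring. Qed.

Lemma proj_eq V x y : subspace V -> V y -> perp V (hsub x y) -> proj V x = y.
Proof.
  intros SV Vy Py. unfold proj.
  destruct (epsilon_spec (inhabits hzero) (fun y => V y /\ perp V (hsub x y))) as [Vp Pp].
  { exists y; auto. }
  set (p := epsilon _ _) in *.
  apply hsub_eq0, nsq_eq0.
  assert (D : V (hsub p y)) by (apply sub_sub; auto).
  pose proof (Pp _ D) as E1. pose proof (Py _ D) as E2.
  revert E1 E2. ips. intros. lra.
Qed.

Lemma complete' (u : nat -> H) :
  (forall eps, eps > 0 -> exists N : nat, forall m n : nat, (N <= m)%nat -> (N <= n)%nat ->
     hnorm (hsub (u m) (u n)) < eps) -> exists l, converges u l.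
Proof. intro C. exact (hcomplete H u C). Qed.

Lemma lt_of_sq a b : 0 <= a -> 0 < b -> a * a < b * b -> a < b.
Proof. intros. nra. Qed.

Lemma arch_inv e : e > 0 -> exists N : nat, forall n, (N <= n)%nat -> / (INR n + 1) < e.
Proof.
  intro He. destruct (INR_unbounded (/ e)) as [N HN]. exists N. intros n Hn.
  apply le_INR in Hn. pose proof (pos_INR N).
  rewrite <- (Rinv_inv e). apply Rinv_lt_contravar. apply Rmult_lt_0_compat; [apply Rinv_0_lt_compat|]; lra.
  lra.
Qed.

Lemma proj_exists V x : closed_subspace V -> exists y, V y /\ perp V (hsub x y).
Proof.
  intros CV. pose proof (cs_sub V CV) as SV. destruct SV as (V0 & Vadd & Vscal).
  destruct CV as (_ & _ & _ & Vcl).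
  set (E := fun r => exists v, V v /\ r = - hinner (hsub x v) (hsub x v)).
  destruct (completeness E) as [m [Hub Hlub]].
  { exists 0. intros r (v & _ & ->). pose proof (nsq_pos (hsub x v)). lra. }
  { exists (- hinner (hsub x hzero) (hsub x hzero)), hzero. auto. }
  set (d := - m).
  assert (Dlow : forall v, V v -> d <= hinner (hsub x v) (hsub x v)).
  { intros v Vv. assert (E (- hinner (hsub x v) (hsub x v))) by (exists v; auto).
    specialize (Hub _ H0). unfold d; lra. }
  assert (D0 : 0 <= d).
  { assert (m <= 0). { apply Hlub. intros r (v & _ & ->). pose proof (nsq_pos (hsub x v)). lra. }
    unfold d; lra. }
  assert (Dapp : forall e, e > 0 -> exists v, V v /\ hinner (hsub x v) (hsub x v) < d + e).
  { intros e He. apply NNPP. intro NE.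
    assert (m <= m - e); [|lra]. apply Hlub. intros r (v & Vv & ->).
    assert (~ (hinner (hsub x v) (hsub x v) < d + e)) by (intro; apply NE; exists v; auto).
    unfold d in H0. lra. }
  set (P := fun n v => V v /\ hinner (hsub x v) (hsub x v) < d + / (INR n + 1)).
  set (vs := fun n => epsilon (inhabits hzero) (P n)).
  assert (HP : forall n, P n (vs n)).
  { intro n. unfold vs. apply epsilon_spec. apply Dapp.
    apply Rinv_0_lt_compat. pose proof (pos_INR n). lra. }
  assert (Cau : forall n k, hinner (hsub (vs n) (vs k)) (hsub (vs n) (vs k))
                  <= 2 * / (INR n + 1) + 2 * / (INR k + 1)).
  { intros n k. destruct (HP n) as [Vn Hn]. destruct (HP k) as [Vk Hk].
    assert (Vw : V (hscal (/2) (hadd (vs n) (vs k)))) by auto.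
    pose proof (Dlow _ Vw) as Hw.
    assert (PI : hinner (hsub (vs n) (vs k)) (hsub (vs n) (vs k)) =
       2 * hinner (hsub x (vs n)) (hsub x (vs n)) + 2 * hinner (hsub x (vs k)) (hsub x (vs k))
       - 4 * hinner (hsub x (hscal (/2) (hadd (vs n) (vs k)))) (hsub x (hscal (/2) (hadd (vs n) (vs k))))).
    { ips. rewrite (ip_sym (vs k) (vs n)), (ip_sym x (vs n)), (ip_sym x (vs k)). field. }
    lra. }
  destruct (complete' vs) as [l Hl].
  { intros eps He. destruct (arch_inv (eps * eps / 4)) as [N HN]. nra.
    exists N. intros n k Hn Hk. apply lt_of_sq. apply hnorm_pos. lra.
    rewrite hnorm_sq. specialize (HN _ Hn) as H1. specialize (HN _ Hk) as H2. specialize (Cau n k). lra. }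
  assert (Vl : V l) by (apply (Vcl vs); auto; intro n; apply HP).
  assert (Dl : hinner (hsub x l) (hsub x l) <= d).
  { apply Rnot_lt_le. intro Hlt.
    set (delta := hnorm (hsub x l) - sqrt d).
    pose proof (hnorm_sq (hsub x l)) as Hb. pose proof (sqrt_sqrt d D0) as Ha.
    pose proof (hnorm_pos (hsub x l)). pose proof (sqrt_pos d).
    assert (Hdelta : delta > 0) by (unfold delta; nra).
    destruct (Hl (delta / 2)) as [N1 HN1]. lra.
    destruct (arch_inv (delta * delta / 4)) as [N2 HN2]. nra.
    set (n := max N1 N2).
    specialize (HN1 n (Nat.le_max_l _ _)). specialize (HN2 n (Nat.le_max_r _ _)).
    destruct (HP n) as [_ Hn].
    pose proof (hnorm_tri x (vs n) l) as T.
    pose proof (hnorm_sq (hsub x (vs n))) as Hc. pose proof (hnorm_pos (hsub x (vs n))).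
    assert (hnorm (hsub x (vs n)) < sqrt d + delta / 2) by nra.
    unfold delta in *. lra. }
  exists l. split; auto. intros w Vw.
  set (a := hsub x l). set (c := hinner a w). set (nw := hinner w w). set (t := c / (nw + 1)).
  pose proof (nsq_pos w) as Hnw. fold nw in Hnw.
  assert (Vlt : V (hadd l (hscal t w))) by auto.
  pose proof (Dlow _ Vlt) as Hd.
  replace (hsub x (hadd l (hscal t w))) with (hsub a (hscal t w)) in Hd by (unfold a; vec).
  revert Hd. ips. rewrite (ip_sym w a). fold c nw. intro Hd. fold a in Dl.
  assert (Ht : t * (nw + 1) = c) by (unfold t; field; lra).
  assert (c * c <= 0) by nra. nra.
Qed.

Lemma proj_spec V x : closed_subspace V -> V (proj V x) /\ perp V (hsub x (proj V x)).
Proof. intro CV. unfold proj. apply epsilon_spec. apply proj_exists; auto. Qed.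

Section ProjS.
Variable S : H -> Prop.
Hypothesis CSS : closed_subspace S.
Let SS := cs_sub S CSS.

Lemma PS_in x : S (proj S x).
Proof. apply proj_spec; auto. Qed.
Lemma PS_perp x : perp S (hsub x (proj S x)).
Proof. apply proj_spec; auto. Qed.
Lemma S_add x y : S x -> S y -> S (hadd x y).
Proof. destruct SS as (_&a&_); auto. Qed.
Lemma S_scal a x : S x -> S (hscal a x).
Proof. destruct SS as (_&_&h); auto. Qed.
Lemma S_zero : S hzero.
Proof. destruct SS as (a&_&_); auto. Qed.

Lemma PS_add x y : proj S (hadd x y) = hadd (proj S x) (proj S y).
Proof. apply proj_eq; auto. apply S_add; apply PS_in.
  intros s Hs. pose proof (PS_perp x s Hs). pose proof (PS_perp y s Hs). revert H0 H1; ips. lra. Qed.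
Lemma PS_scal a x : proj S (hscal a x) = hscal a (proj S x).
Proof. apply proj_eq; auto. apply S_scal; apply PS_in.
  intros s Hs. pose proof (PS_perp x s Hs). revert H0; ips. intro. nra. Qed.
Lemma PS_sub x y : proj S (hsub x y) = hsub (proj S x) (proj S y).
Proof. rewrite !hsub_scal, PS_add, PS_scal. reflexivity. Qed.
Lemma PS_id x : S x -> proj S x = x.
Proof. intro. apply proj_eq; auto. rewrite hsub_self. apply perp_sub. Qed.
Lemma PS_perp0 x : perp S x -> proj S x = hzero.
Proof. intro. apply proj_eq; auto. apply S_zero. replace (hsub x hzero) with x by vec. auto. Qed.
Lemma PS_orth x : hinner (proj S x) (hsub x (proj S x)) = 0.
Proof. rewrite ip_sym. apply PS_perp, PS_in. Qed.
Lemma PS_pyth x : hinner x x = hinner (proj S x) (proj S x) + hinner (hsub x (proj S x)) (hsub x (proj S x)).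
Proof. pose proof (PS_orth x). revert H0. ips. rewrite (ip_sym x (proj S x)). intro. lra. Qed.
Lemma PS_norm_le x : hnorm (proj S x) <= hnorm x.
Proof. apply sq_le_le. apply hnorm_pos. rewrite !hnorm_sq, (PS_pyth x). pose proof (nsq_pos (hsub x (proj S x))). lra. Qed.
Lemma Pperp_eq x : proj (perp S) x = hsub x (proj S x).
Proof. apply proj_eq. apply perp_sub. apply PS_perp.
  replace (hsub x (hsub x (proj S x))) with (proj S x) by vec.
  intros y Hy. rewrite ip_sym. apply Hy, PS_in. Qed.
Lemma Ppp_eq x : proj (perp (perp S)) x = proj S x.
Proof. apply proj_eq. apply perp_sub. intros y Hy. rewrite ip_sym. apply Hy, PS_in.
  intros y Hy. rewrite ip_sym. apply Hy. apply PS_perp. Qed.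
Lemma Pperp_norm_le x : hnorm (hsub x (proj S x)) <= hnorm x.
Proof. apply sq_le_le. apply hnorm_pos. rewrite !hnorm_sq, (PS_pyth x). pose proof (nsq_pos (proj S x)). lra. Qed.
End ProjS.

Lemma le_eps a b : (forall eps, eps > 0 -> a <= b + eps) -> a <= b.
Proof. intro h. apply Rnot_lt_le. intro. specialize (h ((a - b)/2)). lra. Qed.

Lemma cauchy_tele (u : nat -> H) (e : nat -> R) (C : R) :
  (forall k, hnorm (hsub (u (Datatypes.S k)) (u k)) + e (Datatypes.S k) <= e k) ->
  (forall k, 0 <= e k) -> (forall k, e k <= C / (INR k + 1)) ->
  exists l, converges u l /\ forall k, hnorm (hsub l (u k)) <= e k.
Proof.
  intros Hs He HC.
  assert (St : forall m k, hnorm (hsub (u (k + m)%nat) (u k)) + e (k + m)%nat <= e k).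
  { induction m; intro k.
    - rewrite Nat.add_0_r, hsub_self, hnorm0. lra.
    - replace (k + Datatypes.S m)%nat with (Datatypes.S (k + m)) by lia.
      pose proof (hnorm_tri (u (Datatypes.S (k + m))) (u (k + m)%nat) (u k)).
      specialize (Hs (k + m)%nat). specialize (IHm k). lra. }
  assert (St2 : forall m k, (k <= m)%nat -> hnorm (hsub (u m) (u k)) <= e k).
  { intros m k Hkm. replace m with (k + (m - k))%nat by lia. specialize (St (m - k)%nat k).
    specialize (He (k + (m - k))%nat). lra. }
  assert (C0 : 0 <= C). { specialize (HC 0%nat). specialize (He 0%nat). simpl in HC. lra. }
  destruct (complete' u) as [l Hl].
  { intros eps Heps. destruct (arch_inv (eps / (2 * (C + 1)))) as [N HN].
    { apply Rdiv_lt_0_compat; lra. }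
    exists N. intros m n Hm Hn.
    pose proof (HN N (le_n N)) as HNN.
    assert (e N < eps / 2).
    { eapply Rle_lt_trans. apply HC. unfold Rdiv. 
      apply Rle_lt_trans with ((C + 1) * / (INR N + 1)).
      apply Rmult_le_compat_r. left; apply Rinv_0_lt_compat; pose proof (pos_INR N); lra. lra.
      apply Rlt_le_trans with ((C + 1) * (eps / (2 * (C + 1)))).
      apply Rmult_lt_compat_l; lra. right. field. lra. }
    pose proof (hnorm_tri (u m) (u N) (u n)) as T.
    pose proof (St2 m N Hm). pose proof (St2 n N Hn) as T2. rewrite (hnorm_symsub (u n)) in T2. lra. }
  exists l. split; auto. intro k. apply le_eps. intros eps Heps.
  destruct (Hl eps Heps) as [N HN]. set (n := max N k).
  specialize (HN n (Nat.le_max_l _ _)). pose proof (St2 n k (Nat.le_max_r _ _)).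
  pose proof (hnorm_tri l (u n) (u k)) as T. rewrite (hnorm_symsub l (u n)) in T. lra.
Qed.

Section AS.
Variables A W : H -> Prop.
Hypothesis CA : closed_subspace A.
Hypothesis CW : closed_subspace W.
Hypothesis DS : direct_sum_full A (perp W).
Let SA := cs_sub A CA.

Definition Qop x := oproj A (perp W) x.
Lemma Q_spec x : A (Qop x) /\ perp W (hsub x (Qop x)).
Proof. unfold Qop, oproj. apply epsilon_spec. destruct DS as [D _].
  destruct (D x) as (v1 & v2 & H1 & H2 & ->). exists v1. split; auto.
  replace (hsub (hadd v1 v2) v1) with v2 by vec. auto. Qed.
Lemma Q_eq x a : A a -> perp W (hsub x a) -> Qop x = a.
Proof. intros Aa Pa. destruct (Q_spec x) as [AQ PQ]. apply hsub_eq0. destruct DS as [_ D].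
  apply D. apply sub_sub; auto.
  replace (hsub (Qop x) a) with (hsub (hsub x a) (hsub x (Qop x))) by vec.
  apply sub_sub; auto. apply perp_sub. Qed.
Lemma PQ x : proj W (Qop x) = proj W x.
Proof. symmetry. apply proj_eq. apply cs_sub; auto. apply PS_in; auto.
  intros s Hs. destruct (Q_spec x) as [_ PQ]. pose proof (PQ s Hs).
  pose proof (PS_perp W CW (Qop x) s Hs). revert H0 H1. ips. intros. lra. Qed.
Lemma inj_A a : A a -> proj W a = hzero -> a = hzero.
Proof. intros Aa E. destruct DS as [_ D]. apply D; auto.
  pose proof (PS_perp W CW a). rewrite E in H0. replace (hsub a hzero) with a in H0 by vec. auto. Qed.
Lemma surj_A z : W z -> exists a, A a /\ proj W a = z.
Proof. intro Wz. exists (Qop z). split. apply Q_spec. rewrite PQ. apply PS_id; auto. Qed.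
Lemma A_add x y : A x -> A y -> A (hadd x y).
Proof. destruct SA as (_&h&_); auto. Qed.
Lemma A_scal a x : A x -> A (hscal a x).
Proof. destruct SA as (_&_&h); auto. Qed.
Lemma A_zero : A hzero.
Proof. destruct SA as (h&_&_); auto. Qed.

Lemma dense_ball : exists (n : nat) y r, W y /\ r > 0 /\
  (forall z, W z -> hnorm (hsub z y) < r -> forall eps, eps > 0 ->
  exists a, A a /\ hnorm a <= INR n /\ hnorm (hsub (proj W a) z) < eps).
Proof.
  apply NNPP. intro N.
  set (good := fun (n : nat) (p q : H * R) => W (fst q) /\ snd q > 0 /\ snd q <= snd p / 2 /\
      hnorm (hsub (fst q) (fst p)) + snd q <= snd p /\
      forall a, A a -> hnorm a <= INR n -> forall w, hnorm (hsub w (fst q)) <= snd q -> proj W a <> w).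
  assert (Hstep : forall n p, W (fst p) -> snd p > 0 -> exists q, good n p q).
  { intros n [y r] Wy Hr. simpl in Wy, Hr. apply NNPP. intro N2. apply N.
    exists n, y, r. split; auto. split; auto.
    intros z Wz Hz eps Heps. apply NNPP. intro N3. apply N2.
    set (r' := Rmin eps (r - hnorm (hsub z y)) / 2).
    assert (Hm1 : Rmin eps (r - hnorm (hsub z y)) <= eps) by apply Rmin_l.
    assert (Hm2 : Rmin eps (r - hnorm (hsub z y)) <= r - hnorm (hsub z y)) by apply Rmin_r.
    assert (Hm3 : 0 < Rmin eps (r - hnorm (hsub z y))) by (apply Rmin_glb_lt; lra).
    pose proof (hnorm_pos (hsub z y)).
    exists (z, r'). unfold good; simpl. unfold r'. repeat split; auto; try lra.
    intros a Aa Ha w Hw E. apply N3. exists a. split; auto. split; auto. rewrite E.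
    lra. }
  set (F := fun n p => epsilon (inhabits (hzero, 1)) (good n p)).
  set (sq := iter_seq (hzero, 1) F).
  assert (Inv : forall k, W (fst (sq k)) /\ snd (sq k) > 0 /\ snd (sq k) <= / (INR k + 1)).
  { induction k as [|k IH].
    - simpl. split. apply (S_zero W CW). split. lra. rewrite Rplus_0_l, Rinv_1. lra.
    - destruct IH as (IH1 & IH2 & IH3).
      assert (G : good k (sq k) (sq (Datatypes.S k))).
      { change (sq (Datatypes.S k)) with (F k (sq k)). unfold F. apply epsilon_spec. apply Hstep; auto. }
      destruct G as (G1 & G2 & G3 & G4 & G5). split; auto. split; auto.
      pose proof (inv_half k). lra. }
  assert (G : forall k, good k (sq k) (sq (Datatypes.S k))).
  { intro k. change (sq (Datatypes.S k)) with (F k (sq k)). unfold F. apply epsilon_spec. apply Hstep; apply Inv. }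
  destruct (cauchy_tele (fun k => fst (sq k)) (fun k => snd (sq k)) 1) as [l [Hl Hlk]].
  { intro k. apply G. }
  { intro k. left. apply Inv. }
  { intro k. unfold Rdiv. rewrite Rmult_1_l. apply Inv. }
  assert (Wl : W l). { destruct CW as (_&_&_&cl). apply (cl (fun k => fst (sq k)) l); auto. intro; apply Inv. }
  destruct (surj_A l Wl) as [a [Aa Pa]].
  destruct (INR_unbounded (hnorm a)) as [k Hk].
  destruct (G k) as (_&_&_&_&G5). apply (G5 a Aa) with l; auto. lra.
Qed.

Lemma approx : exists K, 0 <= K /\ forall z, W z -> exists a, A a /\ hnorm a <= K * hnorm z /\
   hnorm (hsub (proj W a) z) <= hnorm z / 2.
Proof.
  destruct dense_ball as (n & y & r & Wy & Hr & D).
  pose proof (pos_INR n) as Hn.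
  exists (4 * INR n / r). split. apply Rmult_le_pos. lra. left; apply Rinv_0_lt_compat; lra.
  intros z Wz. destruct (classic (z = hzero)) as [Ez|Nz].
  - subst. exists hzero. split. apply A_zero. rewrite PS_id; auto. rewrite hsub_self, hnorm0. lra.
  - pose proof (hnorm_gt0 z Nz) as Hz. set (nz := hnorm z) in *.
    set (c := r / (2 * nz)). assert (Hc : c > 0) by (unfold c; apply Rdiv_lt_0_compat; lra).
    set (z' := hscal c z).
    assert (Nz' : hnorm z' = r / 2). { unfold z'. rewrite hnorm_scal, Rabs_right by lra. fold nz. unfold c. field. lra. }
    assert (Wz' : W (hadd y z')) by (apply (S_add W CW); auto; apply (S_scal W CW); auto).
    destruct (D (hadd y z') Wz') with (eps := r / 8) as (a1 & A1 & N1 & E1).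
    { replace (hsub (hadd y z') y) with z' by vec. lra. } lra.
    destruct (D y Wy) with (eps := r / 8) as (a2 & A2 & N2 & E2).
    { rewrite hsub_self, hnorm0. lra. } lra.
    exists (hscal (/ c) (hsub a1 a2)). split. apply A_scal. apply sub_sub; auto.
    split.
    + rewrite hnorm_scal, Rabs_right. 2: left; apply Rinv_0_lt_compat; lra.
      pose proof (hnorm_sub a1 a2).
      apply Rle_trans with (/ c * (INR n + INR n)).
      apply Rmult_le_compat_l. left; apply Rinv_0_lt_compat; lra. lra.
      right. unfold c. field. lra.
    + rewrite (PS_scal W CW), (PS_sub W CW).
      replace (hsub (hscal (/ c) (hsub (proj W a1) (proj W a2))) z) with
        (hscal (/ c) (hsub (hsub (proj W a1) (hadd y z')) (hsub (proj W a2) y))).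
      2: { apply ip_ext; intro; unfold z'; ips. field. lra. }
      rewrite hnorm_scal, Rabs_right. 2: left; apply Rinv_0_lt_compat; lra.
      pose proof (hnorm_sub (hsub (proj W a1) (hadd y z')) (hsub (proj W a2) y)).
      apply Rle_trans with (/ c * (r / 8 + r / 8)).
      apply Rmult_le_compat_l. left; apply Rinv_0_lt_compat; lra. lra.
      right. unfold c. field. lra.
Qed.

Lemma small_zero (x C : R) : 0 <= C -> (forall k, x <= C / (INR k + 1)) -> x <= 0.
Proof.
  intros HC Hx. apply Rnot_lt_le. intro Hx0.
  destruct (arch_inv (x / (C + 1))) as [N HN]. apply Rdiv_lt_0_compat; lra.
  specialize (HN N (le_n N)). specialize (Hx N). pose proof (pos_INR N).
  assert (C / (INR N + 1) <= (C + 1) * / (INR N + 1)).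
  { unfold Rdiv. apply Rmult_le_compat_r. left; apply Rinv_0_lt_compat; lra. lra. }
  assert ((C + 1) * / (INR N + 1) < (C + 1) * (x / (C + 1))) by (apply Rmult_lt_compat_l; lra).
  replace ((C + 1) * (x / (C + 1))) with x in H2 by (field; lra). lra.
Qed.

Lemma bounded_below : exists k, k > 0 /\ forall a, A a -> k * hnorm a <= hnorm (proj W a).
Proof.
  destruct approx as (K & HK & Ap).
  exists (/ (2 * K + 1)). split. apply Rinv_0_lt_compat; lra.
  intros a0 Aa0. set (z0 := proj W a0).
  set (Pg := fun z a => A a /\ hnorm a <= K * hnorm z /\ hnorm (hsub (proj W a) z) <= hnorm z / 2).
  set (g := fun z => epsilon (inhabits hzero) (Pg z)).
  assert (Hg : forall z, W z -> Pg z (g z)). { intros z Wz. apply epsilon_spec. apply Ap; auto. }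
  set (st := iter_seq (z0, hzero) (fun _ p => (hsub (fst p) (proj W (g (fst p))), hadd (snd p) (g (fst p))))).
  assert (Inv : forall k, W (fst (st k)) /\ A (snd (st k)) /\ fst (st k) = hsub z0 (proj W (snd (st k)))
       /\ hnorm (fst (st k)) <= hnorm z0 / (INR k + 1)).
  { induction k as [|k IH].
    - simpl. split. apply PS_in; auto. split. apply A_zero. split.
      rewrite (PS_id W CW hzero (S_zero W CW)). vec. rewrite Rplus_0_l. lra.
    - destruct IH as (I1 & I2 & I3 & I4). destruct (Hg _ I1) as (G1 & G2 & G3).
      change (st (Datatypes.S k)) with (hsub (fst (st k)) (proj W (g (fst (st k)))), hadd (snd (st k)) (g (fst (st k)))).
      simpl. split. apply sub_sub. apply cs_sub; auto. auto. apply PS_in; auto.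
      split. apply A_add; auto. split. rewrite (PS_add W CW), I3. vec.
      rewrite hnorm_symsub. pose proof (inv_half k). 
      apply Rle_trans with (hnorm (fst (st k)) / 2). auto.
      apply Rle_trans with (hnorm z0 / (INR k + 1) / 2). lra.
      pose proof (hnorm_pos z0).
      replace (hnorm z0 / (INR k + 1) / 2) with (hnorm z0 * (/ (INR k + 1) / 2)) by (unfold Rdiv; ring).
      unfold Rdiv at 2. apply Rmult_le_compat_l; auto. }
  assert (Step : forall k, hnorm (snd (st (Datatypes.S k))) <= hnorm (snd (st (Datatypes.S k)))). { intros; lra. }
  destruct (cauchy_tele (fun k => snd (st k)) (fun k => 2 * K * hnorm (fst (st k))) (2 * K * hnorm z0))
    as [sg [Hsg Hsgk]].
  { intro k. destruct (Inv k) as (I1 & _). destruct (Hg _ I1) as (G1 & G2 & G3).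
    change (st (Datatypes.S k)) with (hsub (fst (st k)) (proj W (g (fst (st k)))), hadd (snd (st k)) (g (fst (st k)))).
    simpl. replace (hsub (hadd (snd (st k)) (g (fst (st k)))) (snd (st k))) with (g (fst (st k))) by vec.
    rewrite hnorm_symsub. nra. }
  { intro k. pose proof (hnorm_pos (fst (st k))). nra. }
  { intro k. destruct (Inv k) as (_&_&_&I4).
    replace (2 * K * hnorm z0 / (INR k + 1)) with ((2 * K) * (hnorm z0 / (INR k + 1))) by (unfold Rdiv; ring).
    apply Rmult_le_compat_l; lra. }
  assert (Asg : A sg). { pose proof CA as (_&_&_&cl). apply (cl (fun k => snd (st k)) sg); auto. intro; apply Inv. }
  assert (Psg : proj W sg = z0).
  { apply hsub_eq0, hnorm_eq0. apply Rle_antisym. 2: apply hnorm_pos.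
    apply (small_zero _ ((2 * K + 1) * hnorm z0)). pose proof (hnorm_pos z0). nra.
    intro k. destruct (Inv k) as (I1 & I2 & I3 & I4).
    replace (hsub (proj W sg) z0) with (hsub (proj W (hsub sg (snd (st k)))) (fst (st k))).
    2: { rewrite I3, (PS_sub W CW). vec. }
    pose proof (hnorm_sub (proj W (hsub sg (snd (st k)))) (fst (st k))).
    pose proof (PS_norm_le W CW (hsub sg (snd (st k)))). specialize (Hsgk k). simpl in Hsgk.
    unfold Rdiv in *. pose proof (hnorm_pos (fst (st k))). nra. }
  assert (Esg : sg = a0).
  { apply hsub_eq0. apply inj_A. apply sub_sub; auto. rewrite (PS_sub W CW), Psg. apply hsub_self. }
  specialize (Hsgk 0%nat). simpl in Hsgk. replace (hsub sg hzero) with sg in Hsgk by vec.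
  rewrite Esg in Hsgk. fold z0. pose proof (hnorm_pos z0). pose proof (hnorm_pos a0).
  apply Rmult_le_reg_l with (2 * K + 1). lra. rewrite <- Rmult_assoc, Rinv_r, Rmult_1_l by lra. nra.
Qed.

Definition ye (lam : R) a := hadd (proj W a) (hscal lam (hsub a (proj W a))).

Lemma elem_facts lam a : A a -> a <> hzero ->
  ye lam a <> hzero /\ proj W (ye lam a) = proj W a /\
  0 < hnorm (proj W a) / hnorm a /\ 0 <= hnorm (hsub a (proj W a)) / hnorm a /\
  (hnorm (proj W a) / hnorm a) ^ 2 + (hnorm (hsub a (proj W a)) / hnorm a) ^ 2 = 1 /\
  0 <= hnorm (proj W (ye lam a)) / hnorm (ye lam a) /\
  (hnorm (proj W (ye lam a)) / hnorm (ye lam a)) ^ 2 *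
    ((hnorm (proj W a) / hnorm a) ^ 2 + lam ^ 2 * (hnorm (hsub a (proj W a)) / hnorm a) ^ 2)
   = (hnorm (proj W a) / hnorm a) ^ 2.
Proof.
  intros Aa Na. set (s := proj W a). set (t := hsub a s).
  assert (Ns : s <> hzero) by (intro E; apply Na, inj_A; auto).
  assert (Py : proj W (ye lam a) = s).
  { apply proj_eq. apply cs_sub; auto. apply PS_in; auto.
    unfold ye. fold s t. replace (hsub (hadd s (hscal lam t)) s) with (hscal lam t) by vec.
    apply perp_sub. apply PS_perp; auto. }
  assert (Ost : hinner s t = 0) by apply (PS_orth W CW).
  assert (Ny : hinner (ye lam a) (ye lam a) = hinner s s + lam * lam * hinner t t).
  { unfold ye; fold s t. ips. rewrite (ip_sym t s), Ost. ring. }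
  assert (Na2 : hinner a a = hinner s s + hinner t t) by apply (PS_pyth W CW).
  pose proof (hnorm_gt0 _ Ns) as Hal. pose proof (hnorm_gt0 _ Na) as HN.
  pose proof (hnorm_pos t) as Hbe.
  pose proof (hnorm_sq s) as E1. pose proof (hnorm_sq t) as E2. pose proof (hnorm_sq a) as E3.
  pose proof (hnorm_sq (ye lam a)) as E4.
  assert (HM : 0 < hnorm (ye lam a)).
  { pose proof (hnorm_pos (ye lam a)). rewrite Ny in E4.
    assert (0 <= lam * lam * hinner t t) by (apply Rmult_le_pos; [nra | apply nsq_pos]).
    destruct H0 as [h|h]; auto. rewrite <- h in E4. nra. }
  assert (Ny0 : ye lam a <> hzero) by (intro E; rewrite E in HM; rewrite hnorm0 in HM; lra).
  rewrite Py. fold t.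
  set (al := hnorm s) in *. set (be := hnorm t) in *. set (N := hnorm a) in *. set (M := hnorm (ye lam a)) in *.
  split; auto. split; auto.
  split. apply Rdiv_lt_0_compat; lra.
  split. apply Rmult_le_pos. lra. left; apply Rinv_0_lt_compat; lra.
  split. field_simplify; [|lra]. rewrite <- !E1, <- E2, <- E3 in Na2. 
  replace (al ^ 2 + be ^ 2) with (N ^ 2) by nra. field. lra.
  split. apply Rmult_le_pos. lra. left; apply Rinv_0_lt_compat; lra.
  assert (HMM : M * M = al * al + lam * lam * (be * be)) by nra.
  replace ((al / N) ^ 2 + lam ^ 2 * (be / N) ^ 2) with (M * M / (N * N)).
  field. split; lra. rewrite HMM. field. lra.
Qed.

Lemma B_form lam x : hadd (hscal lam (oproj A (perp W) x)) (hscal (1 - lam) (proj W x)) = ye lam (Qop x).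
Proof. fold (Qop x). unfold ye. rewrite PQ. vec. Qed.

Lemma Q_id a : A a -> Qop a = a.
Proof. intro. apply Q_eq; auto. rewrite hsub_self. apply perp_sub. Qed.

Lemma ye0 lam : ye lam hzero = hzero.
Proof. unfold ye. rewrite (PS_id W CW hzero (S_zero W CW)). vec. Qed.
End AS.
End HS.

Lemma Rinf_spec (E : R -> Prop) : (exists x, E x) -> (exists m, forall x, E x -> m <= x) -> is_glb E (Rinf E).
Proof.
  intros [x0 Hx0] [m Hm]. unfold Rinf. apply epsilon_spec.
  destruct (completeness (fun r => E (- r))) as [M [HM1 HM2]].
  { exists (- m). intros r Hr. specialize (Hm _ Hr). lra. }
  { exists (- x0). rewrite Ropp_involutive. auto. }
  exists (- M). split.
  - intros x Hx. assert (- x <= M) by (apply HM1; rewrite Ropp_involutive; auto). lra.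
  - intros b Hb. assert (M <= - b); [|lra]. apply HM2. intros r Hr. specialize (Hb _ Hr). lra.
Qed.

Lemma Rsup_spec (E : R -> Prop) : (exists x, E x) -> (exists m, forall x, E x -> x <= m) -> is_lub E (Rsup E).
Proof.
  intros Hne [m Hm]. unfold Rsup. apply epsilon_spec.
  destruct (completeness E) as [M HM]. exists m; exact Hm. exact Hne. exists M; exact HM.
Qed.

Lemma RL_I c s u v l e : 0 < c -> c <= u -> v <= s -> 0 <= v -> 0 < u -> 0 <= e ->
  u ^ 2 + v ^ 2 = 1 -> e ^ 2 * (u ^ 2 + l ^ 2 * v ^ 2) = u ^ 2 ->
  sqrt (1 / (1 + l ^ 2 * (s ^ 2 / c ^ 2))) <= e.
Proof.
  intros. rewrite <- (sqrt_pow2 e) by auto. apply sqrt_le_1_alt.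
  assert (Hs : v ^ 2 <= s ^ 2) by nra. assert (Hc : c ^ 2 <= u ^ 2) by nra.
  assert (Hr : v ^ 2 / u ^ 2 <= s ^ 2 / c ^ 2).
  { apply Rle_trans with (s ^ 2 / u ^ 2). unfold Rdiv. apply Rmult_le_compat_r.
    left; apply Rinv_0_lt_compat; nra. auto.
    unfold Rdiv. apply Rmult_le_compat_l. nra. apply Rinv_le_contravar; nra. }
  assert (He : e ^ 2 = 1 / (1 + l ^ 2 * (v ^ 2 / u ^ 2))).
  { field_simplify_eq. 2: split; [nra|]. 2: { assert (0 <= l^2 * v^2) by nra. nra. } 
    rewrite <- H6 at 2. ring. }
  rewrite He. unfold Rdiv. rewrite !Rmult_1_l. apply Rinv_le_contravar.
  assert (0 <= l ^ 2 * (v ^ 2 * / u ^ 2)). { apply Rmult_le_pos. nra. apply Rmult_le_pos. nra. left; apply Rinv_0_lt_compat; nra. } lra.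
  apply Rplus_le_compat_l. apply Rmult_le_compat_l. nra. exact Hr.
Qed.

Lemma RL_II c2 s2 u0 v0 l e0 b : 0 <= c2 -> c2 <= v0 -> u0 <= s2 -> 0 < u0 -> 0 <= b -> b <= e0 ->
  e0 ^ 2 * (u0 ^ 2 + l ^ 2 * v0 ^ 2) = u0 ^ 2 -> b ^ 2 <= 1 / (1 + l ^ 2 * (c2 ^ 2 / s2 ^ 2)).
Proof.
  intros. set (X := l ^ 2 * (c2 ^ 2 / s2 ^ 2)).
  assert (Hs2 : 0 < s2 ^ 2) by nra.
  assert (HX : 0 <= X). { unfold X. apply Rmult_le_pos. nra. apply Rmult_le_pos. nra. left; apply Rinv_0_lt_compat; lra. }
  assert (Hu : u0 ^ 2 * (c2 ^ 2 / s2 ^ 2) <= c2 ^ 2).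
  { apply Rle_trans with (s2 ^ 2 * (c2 ^ 2 / s2 ^ 2)). apply Rmult_le_compat_r.
    apply Rmult_le_pos. nra. left; apply Rinv_0_lt_compat; lra. nra. right; field; lra. }
  assert (Hk : u0 ^ 2 * X <= l ^ 2 * v0 ^ 2).
  { unfold X. replace (u0 ^ 2 * (l ^ 2 * (c2 ^ 2 / s2 ^ 2))) with (l ^ 2 * (u0 ^ 2 * (c2 ^ 2 / s2 ^ 2))) by ring.
    apply Rmult_le_compat_l. nra. nra. }
  assert (Hb2 : b ^ 2 <= e0 ^ 2) by nra.
  assert (He : e0 ^ 2 * (1 + X) <= 1).
  { assert (HD : 0 < u0 ^ 2 + l ^ 2 * v0 ^ 2) by nra.
    assert (e0 ^ 2 * (u0 ^ 2 * (1 + X)) <= e0 ^ 2 * (u0 ^ 2 + l ^ 2 * v0 ^ 2)) by (apply Rmult_le_compat_l; nra).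
    nra. }
  unfold Rdiv. rewrite Rmult_1_l. apply Rmult_le_reg_r with (1 + X). lra.
  rewrite Rinv_l by lra. nra.
Qed.

Lemma RL_III c u v l e : c <= u -> 0 < u -> 0 <= e -> u ^ 2 + v ^ 2 = 1 -> l ^ 2 <= 1 ->
  e ^ 2 * (u ^ 2 + l ^ 2 * v ^ 2) = u ^ 2 -> c <= e.
Proof.
  intros. assert (u ^ 2 + l ^ 2 * v ^ 2 <= 1) by nra.
  assert (e ^ 2 >= u ^ 2) by nra. nra.
Qed.

Theorem mainTheorem6 (H : Hilbert) (S A : H -> Prop) (lam : R) :
  closed_subspace S -> closed_subspace A ->
  nonzero_sub S -> nonzero_sub A -> nonzero_sub (perp S) -> nonzero_sub (perp A) ->
  direct_sum_full A (perp S) ->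
  0 <= lam <= 1 ->
  let B := fun x : H => hadd (hscal lam (oproj A (perp S) x)) (hscal (1 - lam) (proj S x)) in
  let BB := range B in
  1 / (1 + lam ^ 2 * ((sin_ang A S) ^ 2 / (cos_ang A S) ^ 2)) <= (cos_ang BB S) ^ 2 /\
  (cos_ang BB S) ^ 2 <= 1 / (1 + lam ^ 2 * ((cos_ang A (perp S)) ^ 2 / (sin_ang A (perp S)) ^ 2)) /\
  cos_ang BB S >= cos_ang A S.
Proof.
  intros CSS CAA _ nA _ _ DS Hlam B BB.
  destruct (bounded_below A S CAA CSS DS) as [k [Hk Hbb]].
  destruct nA as [a0 [Aa0 Na0]].
  pose proof (elem_facts A S CSS DS) as EF.
  assert (Rat0 : forall x y : H, 0 <= hnorm x / hnorm y).
  { intros. unfold Rdiv. apply Rmult_le_pos. apply hnorm_pos.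
    destruct (hnorm_pos y) as [h|h]. left; apply Rinv_0_lt_compat; auto. rewrite <- h, Rinv_0. lra. }
  assert (Rat1 : forall x y : H, x <> hzero -> hnorm y <= hnorm x -> hnorm y / hnorm x <= 1).
  { intros x y Nx Hyx. pose proof (hnorm_gt0 x Nx). apply Rmult_le_reg_r with (hnorm x); auto.
    unfold Rdiv. rewrite Rmult_assoc, Rinv_l by lra. lra. }
  assert (Gc : is_glb (fun r => exists x, A x /\ x <> hzero /\ r = hnorm (proj S x) / hnorm x) (cos_ang A S)).
  { apply Rinf_spec. eauto. exists 0. intros r (x & _ & _ & ->). auto. }
  assert (Gs1 : is_lub (fun r => exists x, A x /\ x <> hzero /\ r = hnorm (proj (perp S) x) / hnorm x) (sin_ang A S)).
  { apply Rsup_spec. eauto. exists 1. intros r (x & _ & Nx & ->). apply Rat1; auto.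
    rewrite (Pperp_eq S CSS). apply (Pperp_norm_le S CSS). }
  assert (Gc2 : is_glb (fun r => exists x, A x /\ x <> hzero /\ r = hnorm (proj (perp S) x) / hnorm x) (cos_ang A (perp S))).
  { apply Rinf_spec. eauto. exists 0. intros r (x & _ & _ & ->). auto. }
  assert (Gs2 : is_lub (fun r => exists x, A x /\ x <> hzero /\ r = hnorm (proj (perp (perp S)) x) / hnorm x) (sin_ang A (perp S))).
  { apply Rsup_spec. eauto. exists 1. intros r (x & _ & Nx & ->). apply Rat1; auto.
    rewrite (Ppp_eq S CSS). apply (PS_norm_le S CSS). }
  assert (BBa : forall a, A a -> BB (ye S lam a)).
  { intros a Aa. exists a. unfold B. rewrite (B_form A S CSS DS). rewrite (Q_id A S CAA DS a Aa). reflexivity. }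
  destruct (EF lam a0 Aa0 Na0) as (Ny0 & _ & U0 & V0 & UV0 & E0 & EE0).
  assert (Gb : is_glb (fun r => exists y, BB y /\ y <> hzero /\ r = hnorm (proj S y) / hnorm y) (cos_ang BB S)).
  { apply Rinf_spec. exists (hnorm (proj S (ye S lam a0)) / hnorm (ye S lam a0)), (ye S lam a0). auto.
    exists 0. intros r (x & _ & _ & ->). auto. }
  assert (Eb : forall r, (exists y, BB y /\ y <> hzero /\ r = hnorm (proj S y) / hnorm y) ->
     exists a, A a /\ a <> hzero /\ r = hnorm (proj S (ye S lam a)) / hnorm (ye S lam a)).
  { intros r (y & [x ->] & Ny & ->). unfold B in *. rewrite (B_form A S CSS DS) in *.
    exists (Qop A S x). split. apply (Q_spec A S DS). split; auto.
    intro E. rewrite E, (ye0 S CSS) in Ny. auto. }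
  assert (Hl2 : lam ^ 2 <= 1) by nra.
  split; [|split].
  -
    assert (Cpos : k <= cos_ang A S).
    { apply (proj2 Gc). intros r (x & Ax & Nx & ->). pose proof (hnorm_gt0 x Nx).
      specialize (Hbb x Ax). apply Rmult_le_reg_r with (hnorm x); auto.
      unfold Rdiv. rewrite Rmult_assoc, Rinv_l by lra. lra. }
    assert (HL : sqrt (1 / (1 + lam ^ 2 * (sin_ang A S ^ 2 / cos_ang A S ^ 2))) <= cos_ang BB S).
    { apply (proj2 Gb). intros r Hr. destruct (Eb r Hr) as (a & Aa & Na & ->).
      destruct (EF lam a Aa Na) as (_ & _ & U & V & UV & E & EE).
      apply RL_I with (u := hnorm (proj S a) / hnorm a) (v := hnorm (hsub a (proj S a)) / hnorm a); auto; try lra.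
      apply (proj1 Gc). eauto.
      apply (proj1 Gs1). exists a. split; auto. split; auto. rewrite (Pperp_eq S CSS). reflexivity. }
    assert (HX : 0 <= 1 / (1 + lam ^ 2 * (sin_ang A S ^ 2 / cos_ang A S ^ 2))).
    { assert (0 <= lam ^ 2 * (sin_ang A S ^ 2 / cos_ang A S ^ 2)).
      { apply Rmult_le_pos. nra. apply Rmult_le_pos. nra. left; apply Rinv_0_lt_compat; nra. }
      unfold Rdiv. rewrite Rmult_1_l. left; apply Rinv_0_lt_compat; lra. }
    pose proof (sqrt_sqrt _ HX). pose proof (sqrt_pos (1 / (1 + lam ^ 2 * (sin_ang A S ^ 2 / cos_ang A S ^ 2)))).
    nra.
  -
    apply RL_II with (u0 := hnorm (proj S a0) / hnorm a0) (v0 := hnorm (hsub a0 (proj S a0)) / hnorm a0)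
      (e0 := hnorm (proj S (ye S lam a0)) / hnorm (ye S lam a0)); auto.
    + apply (proj2 Gc2). intros r (x & _ & _ & ->). auto.
    + apply (proj1 Gc2). exists a0. split; auto. split; auto. rewrite (Pperp_eq S CSS). reflexivity.
    + apply (proj1 Gs2). exists a0. split; auto. split; auto. rewrite (Ppp_eq S CSS). reflexivity.
    + apply (proj2 Gb). intros r (x & _ & _ & ->). auto.
    + apply (proj1 Gb). exists (ye S lam a0). auto.
  - apply Rle_ge. apply (proj2 Gb). intros r Hr. destruct (Eb r Hr) as (a & Aa & Na & ->).
    destruct (EF lam a Aa Na) as (_ & _ & U & V & UV & E & EE).
    apply RL_III with (u := hnorm (proj S a) / hnorm a) (v := hnorm (hsub a (proj S a)) / hnorm a) (l := lam); auto.
    apply (proj1 Gc). eauto.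
Qed.
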